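(* Let $C$ be a closed convex set in a finite-dimensional Euclidean space. Then: (i) (Transitivity) if $\hat F$ is a face of $F$ and $F$ is a face of $C$, where $F$ is an amenable face of $C$, then $\hat F$ is an amenable face of $F$ if and only if $\hat F$ is an amenable face of $C$; (ii) (Inheritance) if $C$ is amenable, then every face $F$ of $C$ is an amenable convex set; (iii) $C$ is amenable if and only if every maximal face $F$ of $C$ is both an amenable face of $C$ and an amenable convex set by itself.
   Context: A face of a closed convex set $C$ is a closed convex subset $F\subseteq C$ such that whenever $x,y\in C$ and $\alpha x+(1-\alpha)y\in F$ for some $\alpha\in(0,1)$, then $x,y\in F$. A face $F$ of $C$ is maximal if $F\ne C$ and there is no face $\hat F$ of $C$ with $\hat F\ne F$, $\hat F\ne C$ such that $F$ is a face of $\hat F$. A face $F$ of $C$ is amenable if for every bounded set $B$ there exists $\kappa>0$ such that $\operatorname{dist}(x,F)\le\kappa\operatorname{dist}(x,C)$ for all $x\in(\operatorname{aff}F)\cap B$; $C$ is amenable if all its faces are amenable. *)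

(* Defs.v *)
From HB Require Import structures.
From mathcomp Require Import all_boot all_order all_algebra.
From mathcomp Require Import all_classical all_reals all_analysis.
Import numFieldNormedType.Exports.
Set Implicit Arguments. Unset Strict Implicit. Unset Printing Implicit Defensive.
Import Order.TTheory GRing.Theory Num.Theory.
Local Open Scope classical_set_scope.
Local Open Scope ring_scope.

Section Defs.
Context {R : realType} {n : nat}.
Notation V := 'rV[R]_n.

Definition enorm (x : V) : R := Num.sqrt (\sum_(i < n) x ord0 i ^+ 2).
Definition edist (x : V) (S : set V) : R := inf [set enorm (x - y) | y in S].

Definition is_convex (S : set V) : Prop :=
  forall x y, S x -> S y -> forall a : R, 0 <= a -> a <= 1 ->
    S (a *: x + (1 - a) *: y).

Definition is_face (F C : set V) : Prop :=
  [/\ closed F, is_convex F, F `<=` C &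
    forall x y (a : R), C x -> C y -> 0 < a -> a < 1 ->
      F (a *: x + (1 - a) *: y) -> F x /\ F y].

Definition is_maximal_face (F C : set V) : Prop :=
  [/\ is_face F C, F <> C &
    ~ (exists Fh, [/\ is_face Fh C, Fh <> F, Fh <> C & is_face F Fh])].

Definition aff (F : set V) : set V :=
  [set x | exists k (s : 'I_k -> V) (l : 'I_k -> R),
     [/\ (forall i, F (s i)), \sum_(i < k) l i = 1 &
         x = \sum_(i < k) l i *: s i]].

Definition ebounded (B : set V) : Prop := exists M : R, forall x, B x -> enorm x <= M.

Definition amenable_face (F C : set V) : Prop :=
  is_face F C /\
  forall B, ebounded B -> exists kappa : R, 0 < kappa /\
    forall x, aff F x -> B x -> edist x F <= kappa * edist x C.

Definition amenable_set (C : set V) : Prop :=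
  forall F, is_face F C -> amenable_face F C.

End Defs.

(* Main.v *)
From Pilot Require Import Defs.
From HB Require Import structures.
From mathcomp Require Import all_boot all_order all_algebra.
From mathcomp Require Import all_classical all_reals all_analysis.
Import numFieldNormedType.Exports.
From mathcomp Require Import ring lra.
Import Pilot.Defs.
Set Implicit Arguments. Unset Strict Implicit. Unset Printing Implicit Defensive.
Import Order.TTheory GRing.Theory Num.Theory.
Local Open Scope classical_set_scope.
Local Open Scope ring_scope.

Section H.
Variables (R : realType) (n : nat).
Notation V := 'rV[R]_n.

Lemma face_trans (A B C : set V) : is_face A B -> is_face B C -> is_face A C.
Proof.
move=> [cA vA AB eA] [cB vB BC eB]; split => //.
  by move=> x /AB /BC.
move=> x y a Cx Cy a0 a1 Axy.
have [Bx By] := eB x y a Cx Cy a0 a1 (AB _ Axy).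
exact: eA x y a Bx By a0 a1 Axy.
Qed.

Lemma face_self (A C : set V) : is_face A C -> is_face A A.
Proof. by move=> [cA vA AC eA]; split. Qed.

Lemma face_refl (C : set V) : closed C -> is_convex C -> is_face C C.
Proof. by move=> cC vC; split. Qed.

Lemma aff_sub (A B : set V) : A `<=` B -> aff A `<=` aff B.
Proof.
move=> AB x [k [s [l [As sl ->]]]]; exists k, s, l; split => // i; exact: AB.
Qed.

Lemma aff_nonempty (A : set V) x : aff A x -> exists y, A y.
Proof.
case=> k [s [l [As sl _]]]; case: k s l As sl => [|k] s l As sl.
  by move: sl; rewrite big_ord0 => /eqP; rewrite eq_sym oner_eq0.
by exists (s ord0).
Qed.

Lemma enorm_ge0 (x : V) : 0 <= enorm x.
Proof. exact: sqrtr_ge0. Qed.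

Lemma edist_sub (A B : set V) x : A `<=` B -> (exists y, A y) ->
  edist x B <= edist x A.
Proof.
move=> AB [y Ay]; apply: lb_le_inf.
  by exists (enorm (x - y)), y.
move=> _ [z Az <-]; apply: ge_inf.
  by exists 0 => _ [w _ <-]; exact: enorm_ge0.
by exists z => //; exact: AB.
Qed.


Lemma convex_sum (F : set V) : is_convex F -> forall k (s : 'I_k -> V) (w : 'I_k -> R),
  (forall i, F (s i)) -> (forall i, 0 <= w i) -> \sum_(i < k) w i = 1 ->
  F (\sum_(i < k) w i *: s i).
Proof.
move=> vF; elim=> [|k IH] s w Fs w0 w1.
  by move: w1; rewrite big_ord0 => /eqP; rewrite eq_sym oner_eq0.
rewrite big_ord_recr /=; move: w1; rewrite big_ord_recr /= => w1.
set t := \sum_(i < k) w (widen_ord (leqnSn k) i) in w1.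
have t0 : 0 <= t by apply: sumr_ge0 => i _.
have wt : w ord_max = 1 - t by rewrite -w1 [t + _]addrC addrK.
have [tz|tnz] := eqVneq t 0.
  have z : forall i : 'I_k, w (widen_ord (leqnSn k) i) = 0.
    by move=> i; apply/eqP; move/eqP: tz; rewrite psumr_eq0 // => /allP; apply; rewrite mem_index_enum.
  rewrite big1; last by move=> i _; rewrite z scale0r.
  by rewrite add0r wt tz subr0 scale1r.
have tp : 0 < t by rewrite lt_def tnz t0.
have -> : \sum_(i < k) w (widen_ord (leqnSn k) i) *: s (widen_ord (leqnSn k) i) =
  t *: \sum_(i < k) (w (widen_ord (leqnSn k) i) / t) *: s (widen_ord (leqnSn k) i).
  rewrite scaler_sumr; apply: eq_bigr => i _; rewrite scalerA; congr (_ *: _).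
  by rewrite mulrC -mulrA mulVf // mulr1.
have e : t = 1 - w ord_max by rewrite wt opprB addrC subrK.
rewrite addrC {1}e; apply: vF.
- exact: Fs.
- apply: IH => [i|i|]; first exact: Fs.
    by apply: divr_ge0 => //; exact: w0.
  rewrite -mulr_suml /= -/t divff //.
- exact: w0.
- by rewrite wt lerBlDr lerDl.
Qed.


Lemma extreme_aff (F Fh : set V) : is_convex F -> F `<=` Fh ->
  (forall x y (a : R), Fh x -> Fh y -> 0 < a -> a < 1 ->
      F (a *: x + (1 - a) *: y) -> F x /\ F y) ->
  forall k (s : 'I_k -> V) (l : 'I_k -> R) y,
  (forall i, F (s i)) -> \sum_(i < k) l i = 1 -> y = \sum_(i < k) l i *: s i ->
  Fh y -> F y.
Proof.
move=> vF FFh eF k s l y Fs l1 ye Fhy.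
pose lp i := Num.max (l i) 0; pose ln i := Num.max (- l i) 0.
have lp0 i : 0 <= lp i by rewrite /lp le_max lexx orbT.
have ln0 i : 0 <= ln i by rewrite /ln le_max lexx orbT.
have hl i : l i = lp i - ln i.
  rewrite /lp /ln /=; have [h|h] := leP 0 (l i).
    by rewrite max_r ?subr0 // oppr_le0.
  rewrite max_l ?sub0r ?opprK //; rewrite lerNr oppr0; exact: ltW.
pose P := \sum_(i < k) lp i; pose N := \sum_(i < k) ln i.
have PN : P = 1 + N.
  by rewrite -l1 (eq_bigr _ (fun i _ => hl i)) sumrB /P /N subrK.
have N0 : 0 <= N by apply: sumr_ge0.
have [Nz|Nnz] := eqVneq N 0.
  have z i : ln i = 0.
    by apply/eqP; move/eqP: Nz; rewrite psumr_eq0 // => /allP; apply; rewrite mem_index_enum.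
  rewrite ye; apply: convex_sum => // i; by rewrite hl z subr0.
have Np : 0 < N by rewrite lt_def Nnz N0.
have P1 : 1 < P by rewrite PN ltrDl.
have Pp : 0 < P by apply: lt_trans P1.
pose SP := \sum_(i < k) lp i *: s i; pose SN := \sum_(i < k) ln i *: s i.
have yS : y = SP - SN.
  by rewrite ye /SP /SN -sumrB; apply: eq_bigr => i _; rewrite hl scalerBl.
have Fp : F (P^-1 *: SP).
  rewrite /SP scaler_sumr; under eq_bigr => i _ do rewrite scalerA mulrC.
  apply: convex_sum => // [i|]; first by rewrite divr_ge0 // ltW.
  by rewrite -mulr_suml divff // gt_eqF.
have Fq : F (N^-1 *: SN).
  rewrite /SN scaler_sumr; under eq_bigr => i _ do rewrite scalerA mulrC.
  apply: convex_sum => // [i|]; first by rewrite divr_ge0 // ltW.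
  by rewrite -mulr_suml divff // gt_eqF.
have e : P^-1 *: SP = P^-1 *: y + (1 - P^-1) *: (N^-1 *: SN).
  have -> : 1 - P^-1 = N / P by rewrite PN; field; rewrite -PN gt_eqF.
  rewrite yS scalerA mulrAC mulfV ?gt_eqF // mul1r scalerBr subrK //.
have := eF y (N^-1 *: SN) P^-1 Fhy (FFh _ Fq).
rewrite invr_gt0 Pp invf_lt1 // => /(_ isT P1).
by rewrite -e => /(_ Fp) [].
Qed.


Definition lift (x : V) : 'rV[R]_(n + 1) := row_mx x (const_mx 1).

Definition rows_in (F : set V) k (M : 'M[R]_(k, n + 1)) :=
  forall i, F (lsubmx (row i M)) /\ rsubmx (row i M) = const_mx 1.

Lemma notin_span (F Fh : set V) k (M : 'M[R]_(k, n + 1)) y :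
  is_face F Fh -> Fh y -> ~ F y -> rows_in F M -> ~~ (lift y <= M)%MS.
Proof.
move=> [_ vF FFh eF] Fhy nFy rM; apply/negP => /submxP [u yu].
apply: nFy; apply: (extreme_aff vF FFh eF (s := fun i => lsubmx (row i M)) (l := fun i => u 0 i)) => //.
- by move=> i; case: (rM i).
- have := congr1 (fun v => rsubmx v 0 0) yu.
  rewrite /lift row_mxKr mxE mulmx_sum_row linear_sum /= summxE => ->.
  by apply: eq_bigr => i _; rewrite linearZ /= mxE (proj2 (rM i)) mxE mulr1.
- have := congr1 lsubmx yu.
  by rewrite /lift row_mxKl mulmx_sum_row linear_sum /= => ->; apply: eq_bigr => i _; rewrite linearZ.
Qed.

Lemma rows_in_sub (F G : set V) k (M : 'M[R]_(k, n + 1)) :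
  F `<=` G -> rows_in F M -> rows_in G M.
Proof. by move=> FG rM i; case: (rM i) => h1 h2; split => //; apply: FG. Qed.

Lemma rows_in_col (F : set V) k (M : 'M[R]_(k, n + 1)) y :
  rows_in F M -> F y -> rows_in F (col_mx M (lift y)).
Proof.
move=> rM Fy i; rewrite -(@fintype.splitK k 1 i); case: (fintype.split i) => j /=.
  by rewrite rowKu; apply: rM.
by rewrite rowKd /lift row_id row_mxKl row_mxKr.
Qed.

Lemma rank_col k (M : 'M[R]_(k, n + 1)) (v : 'rV[R]_(n + 1)) :
  ~~ (v <= M)%MS -> (\rank M < \rank (col_mx M v))%N.
Proof.
move=> nv; apply: rank_ltmx; rewrite ltmxE col_mx_sub submx_refl /= (negbTE nv) andbT.
by have := submx_refl (col_mx M v); rewrite col_mx_sub => /andP[].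
Qed.

Lemma exists_max_face (C G : set V) : is_face G C -> G <> C ->
  exists F, is_maximal_face F C /\ is_face G F.
Proof.
move=> GC GnC.
pose Q j := exists F k (M : 'M[R]_(k, n + 1)),
  [/\ is_face F C, is_face G F, F <> C, rows_in F M & \rank M = j].
pose P := fun j => `[< Q j >].
have exP : exists j, P j.
  exists 0%N; apply/asboolP; exists G, 0%N, 0; split => //.
  - exact: face_self GC.
  - by case.
  - by rewrite mxrank0.
have ubP : forall j, P j -> (j <= n + 1)%N.
  by move=> j /asboolP [F [k [M [_ _ _ _ <-]]]]; apply: rank_leq_col.
case: (ex_maxnP exP ubP) => j /asboolP [F [k [M [FC GF FnC rM rk]]]] jmax.
exists F; split => //; split => //.
move=> [Fh [FhC FhnF FhnC FFh]].
have [y [Fhy nFy]] : exists y, Fh y /\ ~ F y.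
  apply: contrapT => H; apply: FhnF; apply/seteqP; split; last by case: FFh.
  by move=> y Fhy; apply: contrapT => nF; apply: H; exists y.
have := jmax (\rank (col_mx M (lift y))).
have PQ : P (\rank (col_mx M (lift y))).
  apply/asboolP; exists Fh, (k + 1)%N, (col_mx M (lift y)); split => //.
  - exact: face_trans GF FFh.
  - apply: rows_in_col => //; apply: rows_in_sub rM; by case: FFh.
move=> /(_ PQ); rewrite -rk leqNgt (rank_col (notin_span FFh Fhy nFy rM)) //.
Qed.

End H.

Theorem proposition3p6 (R : realType) (n : nat) (C : set 'rV[R]_n) :
  closed C -> is_convex C ->
  [/\ (forall F Fh : set 'rV[R]_n,
         is_face Fh F -> is_face F C -> amenable_face F C ->
         (amenable_face Fh F <-> amenable_face Fh C)),
      (amenable_set C -> forall F, is_face F C -> amenable_set F) &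
      (amenable_set C <->
         forall F, is_maximal_face F C -> amenable_face F C /\ amenable_set F)].
Proof.
move=> cC vC.
have part1 : forall F Fh : set 'rV[R]_n, is_face Fh F -> is_face F C ->
    amenable_face F C -> (amenable_face Fh F <-> amenable_face Fh C).
  move=> F Fh FhF FC [_ aF]; split.
  - move=> [_ aFh]; split; first exact: face_trans FhF FC.
    move=> B bB; have [k1 [k1p h1]] := aFh B bB; have [k2 [k2p h2]] := aF B bB.
    exists (k1 * k2); split; first by rewrite mulr_gt0.
    move=> x ax Bx; apply: le_trans (h1 x ax Bx) _.
    rewrite -mulrA; apply: ler_wpM2l; first exact: ltW.
    apply: h2 => //; apply: aff_sub ax; by case: FhF.
  - move=> [_ aFh]; split => //.
    move=> B bB; have [k1 [k1p h1]] := aFh B bB; exists k1; split => //.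
    move=> x ax Bx; apply: le_trans (h1 x ax Bx) _.
    apply: ler_wpM2l; first exact: ltW.
    apply: edist_sub; first by case: FC.
    have [y Fhy] := aff_nonempty ax; exists y; by case: FhF => _ _ /(_ y Fhy).
have part2 : amenable_set C -> forall F, is_face F C -> amenable_set F.
  move=> aC F FC G GF; apply/(part1 F G GF FC (aC F FC)); apply: aC; exact: face_trans GF FC.
split => //; split.
- move=> aC F [FC _ _]; split; [exact: aC | exact: part2].
- move=> H G GC; have [->|GnC] := pselect (G = C).
    split; first exact: face_refl.
    by move=> B _; exists 1; split => // x _ _; rewrite mul1r.
  have [F [Fmax GF]] := exists_max_face GC GnC.
  have [aF sF] := H F Fmax.
  case: Fmax => FC _ _.
  apply/(part1 F G GF FC aF); exact: sF.
Qed.
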